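(* In the Setting below, for each $i$ the digraph $O_i$ is an out-tree rooted at $r$, and every vertex of $O_i$ with positive out-degree has out-degree at least two.
   Context: A test $T$ on $[n]$ separates $i\neq j$ if $|\{i,j\}\cap T|=1$. The classes induced by a collection $\mathcal{T}'$ of tests are the equivalence classes of the relation ''$i,j$ are not separated by any test of $\mathcal{T}'$''. Setting: $\mathcal{T}$ is a collection of distinct tests on $[n]$ that is a test cover and contains every singleton $\{x\}$, $x\in[n]$; $\mathcal{F}\subseteq\mathcal{T}$ has the property that for every $T\in\mathcal{T}\setminus\mathcal{F}$, $\mathcal{F}\cup\{T\}$ induces at most one more class than $\mathcal{F}$, and for every two $T,T'\in\mathcal{T}\setminus\mathcal{F}$, $\mathcal{F}\cup\{T,T'\}$ induces at most two more classes than $\mathcal{F}$. Let $C_1,\dots,C_l$ be the classes induced by $\mathcal{F}$. For $C\subseteq[n]$, a test $S\in\mathcal{T}$ is a $C$-test if $S\cap C\neq\emptyset$ and $C\setminus S\neq\emptyset$; $L(S)=S\cap C$. Every $C_i$-test $S$ satisfies $|S\cap C_i|\le|C_i|/2$. The digraph $O_i$ has a root vertex $r$ with $S_r=C_i$, and one further vertex $v$ for each distinct set $S_v\subseteq C_i$ such that $S_v=L(S)$ for some $C_i$-test $S\in\mathcal{T}$; there is an arc from $v$ to $w$ iff $S_w\subsetneq S_v$ and there is no vertex $u$ with $S_w\subsetneq S_u\subsetneq S_v$. An out-tree is an orientation of a tree with exactly one vertex of in-degree zero (the root). *)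

(* Defs.v *)
From mathcomp Require Import all_boot.
Set Implicit Arguments. Unset Strict Implicit. Unset Printing Implicit Defensive.

Section TestCovers.
Variable n : nat.
Notation test := {set 'I_n}.

Definition separates (T : test) (i j : 'I_n) : bool := (i \in T) != (j \in T).

Definition test_cover (TT : {set test}) : Prop :=
  forall i j : 'I_n, i != j -> exists2 T, T \in TT & separates T i j.

Definition unsep (F : {set test}) (i j : 'I_n) : bool :=
  [forall T in F, ~~ separates T i j].

Definition classes (F : {set test}) : {set test} :=
  [set [set j | unsep F i j] | i : 'I_n].

Definition C_test (C S : test) : bool := (S :&: C != set0) && (C :\: S != set0).

Definition O_vertices (TT : {set test}) (C : test) : {set test} :=
  C |: [set S :&: C | S in [set S in TT | C_test C S]].

Definition O_arc (TT : {set test}) (C : test) (v w : test) : bool :=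
  [&& v \in O_vertices TT C, w \in O_vertices TT C, w \proper v &
      ~~ [exists u in O_vertices TT C, (w \proper u) && (u \proper v)]].
End TestCovers.

Section Digraphs.
Variable V : finType.

Definition indeg (D : {set V}) (a : rel V) (v : V) : nat := #|[set u in D | a u v]|.
Definition outdeg (D : {set V}) (a : rel V) (v : V) : nat := #|[set w in D | a v w]|.

Definition underlying (D : {set V}) (a : rel V) : rel V :=
  fun x y => [&& x \in D, y \in D & a x y || a y x].

Definition is_tree (D : {set V}) (e : rel V) : Prop :=
  (forall x y, x \in D -> y \in D -> connect e x y) /\
  (forall c : seq V, all (mem D) c -> 3 <= size c -> ~ ucycle e c).

Definition oriented_tree (D : {set V}) (a : rel V) : Prop :=
  [/\ forall x y, a x y -> (x \in D) && (y \in D),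
      forall x, ~~ a x x,
      forall x y, a x y -> ~~ a y x &
      is_tree D (underlying D a)].

Definition out_tree (D : {set V}) (a : rel V) (r : V) : Prop :=
  [/\ oriented_tree D a, r \in D, indeg D a r = 0 &
      forall v, v \in D -> indeg D a v = 0 -> v = r].
End Digraphs.

(* Main.v *)
Require Import Defs.
From mathcomp Require Import all_boot.
From mathcomp Require Import zify.
Set Implicit Arguments. Unset Strict Implicit. Unset Printing Implicit Defensive.

Lemma unsep_refl n (F : {set {set 'I_n}}) i : unsep F i i.
Proof. by apply/forall_inP => T _; rewrite /separates eqxx. Qed.

Lemma unsep_sym n (F : {set {set 'I_n}}) i j : unsep F i j -> unsep F j i.
Proof. move=> /forall_inP H; apply/forall_inP => T /H; by rewrite /separates eq_sym. Qed.

Lemma unsep_trans n (F : {set {set 'I_n}}) i j k :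
  unsep F i j -> unsep F j k -> unsep F i k.
Proof.
move=> /forall_inP H1 /forall_inP H2; apply/forall_inP => T HT.
move: (H1 T HT) (H2 T HT); rewrite /separates !negbK => /eqP-> /eqP->; done.
Qed.

Lemma unsep_mem n (F : {set {set 'I_n}}) T i j :
  T \in F -> unsep F i j -> (i \in T) = (j \in T).
Proof. by move=> HT /forall_inP /(_ T HT); rewrite /separates negbK => /eqP. Qed.

Lemma unsep_sub n (F G : {set {set 'I_n}}) i j :
  F \subset G -> unsep G i j -> unsep F i j.
Proof. by move=> /subsetP sFG /forall_inP H; apply/forall_inP => T /sFG /H. Qed.

Definition cl n (F : {set {set 'I_n}}) i := [set j | unsep F i j].

Lemma cl_eq n (F : {set {set 'I_n}}) i j : unsep F i j -> cl F i = cl F j.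
Proof.
move=> Hij; apply/setP => k; rewrite !inE; apply/idP/idP => H.
  exact: unsep_trans (unsep_sym Hij) H.
exact: unsep_trans Hij H.
Qed.

Lemma classesP n (F : {set {set 'I_n}}) C :
  C \in classes F -> exists i, C = cl F i.
Proof. by case/imsetP => i _ ->; exists i. Qed.

Lemma in_class n (F : {set {set 'I_n}}) C x y :
  C \in classes F -> x \in C -> y \in C -> unsep F x y.
Proof.
case/classesP => i ->; rewrite !inE => Hx Hy.
exact: unsep_trans (unsep_sym Hx) Hy.
Qed.

Lemma count_classes n (F G : {set {set 'I_n}}) C (X : {set 'I_n}) :
  F \subset G -> C \in classes F -> X \subset C ->
  {in X &, forall x y, unsep G x y -> x = y} ->
  #|classes F| + #|X| <= #|classes G| + 1.
Proof.
move=> sFG HC sXC Hinj.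
set g := fun K : {set 'I_n} => [set j | [exists i in K, unsep F i j]].
have gcl i : g (cl G i) = cl F i.
  apply/setP => j; rewrite !inE; apply/existsP/idP.
    case=> k /andP[]; rewrite inE => /(unsep_sub sFG) Hik Hkj.
    exact: unsep_trans Hik Hkj.
  by move=> Hj; exists i; rewrite inE unsep_refl.
set Q := classes G; set P := classes F.
set B := [set K in Q | g K == C].
have e1 := cardsID B Q.
have e2 := cardsD1 C P.
rewrite HC /= in e2.
have h1 : #|P :\ C| <= #|Q :\: B|.
  apply: leq_trans (leq_imset_card g _); apply: subset_leq_card.
  apply/subsetP => K; rewrite !inE => /andP[KC /imsetP[i _ Ki]].
  apply/imsetP; exists (cl G i); last by rewrite gcl /cl Ki.
  rewrite !inE; apply/andP; split; last by apply/imsetP; exists i.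
  by rewrite gcl /cl -Ki (negbTE KC) andbF.
have h2 : #|X| <= #|Q :&: B|.
  have -> : #|X| = #|[set cl G x | x in X]|.
    rewrite card_in_imset // => x y Hx Hy Heq; apply: Hinj => //.
    have : y \in cl G y by rewrite inE unsep_refl.
    by rewrite -Heq inE.
  apply: subset_leq_card; apply/subsetP => K /imsetP[x Hx ->].
  have Q1 : cl G x \in Q by apply/imsetP; exists x.
  rewrite !inE Q1 gcl /=.
  case/classesP: (HC) => i0 Ci0.
  have : x \in C by apply: (subsetP sXC).
  by rewrite {1}Ci0 inE => /cl_eq <-; rewrite Ci0.
rewrite e2 -e1; apply: (leq_trans (leq_add (leq_add (leqnn 1) h1) h2)).
by rewrite [_ + 1]addnC (addnC #|Q :&: B|) addnA.
Qed.
Lemma in4 (T : finType) (a b c d x : T) : x \in [set a;b;c;d] -> [\/ x = a, x = b, x = c | x = d].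
Proof. by rewrite !inE => /orP[/orP[/orP[]|]|] /eqP->; [constructor 1|constructor 2|constructor 3|constructor 4]. Qed.
Lemma arith1 x y z w t : 2 * x <= t -> 2 * y <= t -> z + w = x + y -> 0 < w -> t <= z -> False.
Proof. lia. Qed.
Lemma arith2 x y : y <= x + 2 -> x + 4 <= y + 1 -> False.
Proof. lia. Qed.
Lemma Ctest_notF n (F : {set {set 'I_n}}) C S :
  C \in classes F -> C_test C S -> S \notin F.
Proof.
move=> HC /andP[/set0Pn[y Hy] /set0Pn[z Hz]]; apply/negP => SF.
move: Hy Hz; rewrite !inE => /andP[yS yC] /andP[zS zC].
have := unsep_mem SF (in_class HC yC zC).
by rewrite yS (negbTE zS).
Qed.

Lemma O_verticesP n (TT : {set {set 'I_n}}) C v :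
  v \in O_vertices TT C -> v = C \/ exists2 S, S \in TT & C_test C S /\ v = S :&: C.
Proof.
rewrite /O_vertices !inE => /predU1P[->|/imsetP[S]]; first by left.
by rewrite inE => /andP[STT Sct] ->; right; exists S.
Qed.

Lemma O_sub n (TT : {set {set 'I_n}}) C v : v \in O_vertices TT C -> v \subset C.
Proof. by case/O_verticesP => [->|[S _ [_ ->]]]; [exact: subxx | exact: subsetIr]. Qed.

Lemma O_nonempty n (TT F : {set {set 'I_n}}) C v :
  C \in classes F -> v \in O_vertices TT C -> v != set0.
Proof.
move=> HC; case/O_verticesP => [->|[S _ [/andP[Hne _] ->]]] //.
case/classesP: HC => i ->; apply/set0Pn; exists i; by rewrite inE unsep_refl.
Qed.

Lemma laminar n (TT F : {set {set 'I_n}}) C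
  (HF : F \subset TT)
  (H2 : forall T T', T \in TT :\: F -> T' \in TT :\: F ->
          #|classes (T |: (T' |: F))| <= #|classes F| + 2)
  (Hhalf : forall C, C \in classes F -> forall S, S \in TT -> C_test C S ->
          2 * #|S :&: C| <= #|C|) :
  C \in classes F -> forall u v, u \in O_vertices TT C -> v \in O_vertices TT C ->
  u :&: v != set0 -> (u \subset v) || (v \subset u).
Proof.
move=> HC u v Hu Hv Huv.
case/O_verticesP: (Hu) => [Eu|[S STT [Sct Eu]]].
  by rewrite Eu (O_sub Hv) orbT.
case/O_verticesP: (Hv) => [Ev|[S' STT' [Sct' Ev]]].
  by rewrite Ev (O_sub Hu).
apply/negPn/negP; rewrite negb_or => /andP[/subsetPn[b bu bv] /subsetPn[c cv cu]].
case/set0Pn: Huv => a; rewrite inE => /andP[au av].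
have hu := Hhalf C HC S STT Sct; have hv := Hhalf C HC S' STT' Sct'.
rewrite -Eu in hu; rewrite -Ev in hv.
have hUI := cardsUI u v.
have hI : 0 < #|u :&: v| by apply/card_gt0P; exists a; rewrite inE au av.
have : ~~ (C \subset u :|: v).
  apply/negP => /subset_leq_card hC.
  move: hu hv hUI hI hC.
  exact: arith1.
case/subsetPn => d dC; rewrite inE negb_or => /andP[du dv].
have SnF := Ctest_notF HC Sct; have SnF' := Ctest_notF HC Sct'.
have := H2 S S'; rewrite !inE STT STT' SnF SnF' => /(_ isT isT) H.
set X := [set a; b; c; d].
have memC x : x \in u -> x \in C by move/(subsetP (O_sub Hu)).
have memC' x : x \in v -> x \in C by move/(subsetP (O_sub Hv)).
have pS x : x \in C -> (x \in S) = (x \in u) by move=> xC; rewrite Eu inE xC andbT.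
have pS' x : x \in C -> (x \in S') = (x \in v) by move=> xC; rewrite Ev inE xC andbT.
have aC := memC a au; have bC := memC b bu; have cC := memC' c cv.
have sFG : F \subset S |: (S' |: F) by apply/subsetP => T TF; rewrite !inE TF !orbT.
have HX : X \subset C by apply/subsetP => x /in4[]->.
have Hinj : {in X &, forall x y, unsep (S |: (S' |: F)) x y -> x = y}.
  move=> x y xX yX Hxy.
  have e1 : (x \in u) = (y \in u).
    rewrite -pS ?(subsetP HX) // -pS ?(subsetP HX) //.
    by apply: unsep_mem Hxy; rewrite !inE eqxx.
  have e2 : (x \in v) = (y \in v).
    rewrite -pS' ?(subsetP HX) // -pS' ?(subsetP HX) //.
    by apply: unsep_mem Hxy; rewrite !inE eqxx orbT.
  move: xX yX e1 e2 => /in4[]-> /in4[]->;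
    rewrite ?au ?av ?bu ?(negbTE bv) ?cv ?(negbTE cu) ?(negbTE du) ?(negbTE dv) //.
have := count_classes sFG HC HX Hinj.
have -> : #|X| = 4.
  have ne x y (A : {set 'I_n}) : x \in A -> y \notin A -> (x == y) = false.
    by move=> xA yA; apply/negbTE; apply: contraNneq yA => <-.
  have ne' x y (A : {set 'I_n}) : x \in A -> y \notin A -> (y == x) = false.
    by move=> xA yA; rewrite eq_sym; apply: ne xA yA.
  rewrite /X [_ :|: [set d]]setUC cardsU1 [_ :|: [set c]]setUC cardsU1 cards2 !inE.
  by rewrite ?(ne _ _ _ av bv) ?(ne _ _ _ au cu) ?(ne _ _ _ au du) ?(ne _ _ _ bu cu)
     ?(ne _ _ _ bu du) ?(ne _ _ _ cv dv) ?(ne' _ _ _ av bv) ?(ne' _ _ _ au cu) ?(ne' _ _ _ au du) ?(ne' _ _ _ bu cu)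
     ?(ne' _ _ _ bu du) ?(ne' _ _ _ cv dv).
exact: arith2.
Qed.

Lemma cover_below n (TT : {set {set 'I_n}}) C v w :
  v \in O_vertices TT C -> w \in O_vertices TT C -> w \proper v ->
  exists2 u, O_arc TT C v u & w \subset u.
Proof.
move=> Hv Hw wv.
pose P := fun u => [&& u \in O_vertices TT C, w \subset u & u \proper v].
have Pw : P w by rewrite /P Hw subxx wv.
case: (arg_maxnP (fun u : {set 'I_n} => #|u|) Pw) => u /and3P[Hu wu uv] Hmax.
exists u => //; rewrite /O_arc Hv Hu uv /=.
apply/negP => /exists_inP[z Hz /andP[uz zv]].
have := Hmax z; rewrite /P Hz (subset_trans wu (proper_sub uz)) zv => /(_ isT) /=.
by rewrite leqNgt (proper_card uz).
Qed.

Lemma cover_above n (TT : {set {set 'I_n}}) C v :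
  v \in O_vertices TT C -> v != C -> exists p, O_arc TT C p v.
Proof.
move=> Hv vC.
have HC : C \in O_vertices TT C by rewrite /O_vertices setU11.
pose P := fun u => (u \in O_vertices TT C) && (v \proper u).
have PC : P C by rewrite /P HC properEneq vC (O_sub Hv).
case: (arg_minnP (fun u : {set 'I_n} => #|u|) PC) => u /andP[Hu vu] Hmin.
exists u; rewrite /O_arc Hv Hu vu /=.
apply/negP => /exists_inP[z Hz /andP[vz zu]].
have := Hmin z; rewrite /P Hz vz => /(_ isT) /=.
by rewrite leqNgt (proper_card zu).
Qed.

Lemma parent_unique n (TT F : {set {set 'I_n}}) C
  (Hlam : forall u v, u \in O_vertices TT C -> v \in O_vertices TT C ->
     u :&: v != set0 -> (u \subset v) || (v \subset u)) :
  C \in classes F -> forall p1 p2 m, O_arc TT C p1 m -> O_arc TT C p2 m -> p1 = p2.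
Proof.
move=> HC p1 p2 m /and4P[H1 Hm m1 N1] /and4P[H2 _ m2 N2].
have ne : p1 :&: p2 != set0.
  case/set0Pn: (O_nonempty HC Hm) => x xm; apply/set0Pn; exists x.
  by rewrite inE (subsetP (proper_sub m1)) ?(subsetP (proper_sub m2)).
case: (eqVneq p1 p2) => // ne12.
case/orP: (Hlam _ _ H1 H2 ne) => sub.
  case/negP: N2; apply/exists_inP; exists p1 => //.
  by rewrite m1 properEneq ne12 sub.
case/negP: N1; apply/exists_inP; exists p2 => //.
by rewrite m2 properEneq eq_sym ne12 sub.
Qed.

Theorem mainTheorem11 (n : nat) (TT F : {set {set 'I_n}})
  (Hcover : test_cover TT)
  (Hsing : forall x : 'I_n, [set x] \in TT)
  (HF : F \subset TT)
  (H1 : forall T, T \in TT :\: F ->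
          #|classes (T |: F)| <= #|classes F| + 1)
  (H2 : forall T T', T \in TT :\: F -> T' \in TT :\: F ->
          #|classes (T |: (T' |: F))| <= #|classes F| + 2)
  (Hhalf : forall C, C \in classes F -> forall S, S \in TT -> C_test C S ->
          2 * #|S :&: C| <= #|C|) :
  forall C, C \in classes F ->
    out_tree (O_vertices TT C) (O_arc TT C) C /\
    (forall v, v \in O_vertices TT C -> 0 < outdeg (O_vertices TT C) (O_arc TT C) v ->
       2 <= outdeg (O_vertices TT C) (O_arc TT C) v).
Proof.
move=> C HC.
have Hlam := laminar HF H2 Hhalf HC.
have HCD : C \in O_vertices TT C by rewrite /O_vertices setU11.
have Hpu := parent_unique Hlam HC.
set D := O_vertices TT C in HCD Hlam Hpu *.
set a := O_arc TT C in Hpu *.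
have arcD x y : a x y -> (x \in D) && (y \in D) by case/and4P => -> ->.
have arcP x y : a x y -> y \proper x by case/and4P.
split.
  split.
  - split.
    + exact: arcD.
    + by move=> x; apply/negP => /arcP; rewrite properxx.
    + move=> x y /arcP xy; apply/negP => /arcP yx.
      by have := proper_trans xy yx; rewrite properxx.
    + set e := underlying D a.
      have esym : symmetric e.
        move=> x y; rewrite /e /underlying.
        by apply/and3P/and3P => -[-> -> ]; rewrite orbC.
      have conn : forall k x, x \in D -> #|C| - #|x| < k -> connect e x C.
        elim=> [//|k IH] x xD hk.
        case: (eqVneq x C) => [->|xC]; first exact: connect0.
        case: (cover_above xD xC) => p pa0.
        have pa : a p x := pa0.
        have pD : p \in D by case/andP: (arcD _ _ pa).
        apply: connect_trans (connect1 _) (IH p pD _).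
          by rewrite /e /underlying xD pD pa orbT.
        have h1 := proper_card (arcP _ _ pa).
        have h2 := subset_leq_card (O_sub pD).
        move: hk h1 h2; move: #|C| #|x| #|p| => u v w; lia.
      split.
        move=> x y xD yD.
        apply: connect_trans (conn _ x xD (ltnSn _)) _.
        by rewrite (sym_connect_sym esym); apply: conn yD (ltnSn _).
      move=> c cD sc /andP[cc uc].
      case: c cD sc cc uc => [//|c0 c'] cD sc cc uc.
      have P0 : (fun z : {set 'I_n} => z \in c0 :: c') c0 by rewrite /= mem_head.
      case: (arg_minnP (fun u : {set 'I_n} => #|u|) P0) => m mc Hmin.
      case: (rot_to mc) => i s Hrot.
      have cc' : cycle e (m :: s) by rewrite -Hrot rot_cycle.
      have uc' : uniq (m :: s) by rewrite -Hrot rot_uniq.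
      have sz : 2 <= size s by move: sc; rewrite -(size_rot i) Hrot.
      have ins z : z \in s -> z \in c0 :: c'.
        by move=> zs; rewrite -(mem_rot i) Hrot inE zs orbT.
      case: s Hrot cc' uc' sz ins => [//|a1 s1] Hrot cc' uc' sz ins.
      case/lastP: s1 Hrot cc' uc' sz ins => [//|s2 b] Hrot cc' uc' sz ins.
      have a1c := ins a1 (mem_head _ _).
      have bc : b \in c0 :: c' by apply: ins; rewrite inE mem_rcons mem_head orbT.
      have nab : a1 != b.
        move: uc'; rewrite /= mem_rcons inE negb_or => /andP[_ /andP[/andP[/eqP ne _] _]].
        by apply/eqP => E; apply: ne; rewrite E.
      move: cc'; rewrite /cycle rcons_path last_cons last_rcons => /andP[hp ebm].
      have ema : e m a1 by case/andP: hp.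
      have toparent z : z \in c0 :: c' -> e m z || e z m -> a z m.
        move=> zc /orP[] /and3P[_ _] /orP[] // /arcP pr.
          by have := Hmin z zc; rewrite /= leqNgt (proper_card pr).
        by have := Hmin z zc; rewrite /= leqNgt (proper_card pr).
      have pa := toparent a1 a1c (introT orP (or_introl ema)).
      have pb := toparent b bc (introT orP (or_intror ebm)).
      by move/eqP: nab; apply; apply: Hpu pa pb.
  - exact: HCD.
  - apply/eqP; rewrite cards_eq0; apply/eqP/setP => u; rewrite in_set [u \in set0]inE.
    apply/negP => /andP[uD /arcP Cu].
    by have := proper_sub_trans Cu (O_sub uD); rewrite properxx.
  - move=> v vD; case: (eqVneq v C) => // vC.
    case: (cover_above vD vC) => p pa0.
    have pa : a p v := pa0.
    have pD : p \in D by case/andP: (arcD _ _ pa).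
    move/eqP; rewrite cards_eq0 => /eqP/setP/(_ p); rewrite in_set pD pa inE //.
move=> v vD; rewrite /outdeg card_gt0 => /set0Pn[w]; rewrite in_set => /andP[wD vw].
have wv := arcP _ _ vw.
case/properP: (wv) => _ [x xv xw].
case/set0Pn: (O_nonempty HC wD) => y yw.
have yv : y \in v by apply: (subsetP (proper_sub wv)).
have xC : x \in C by apply: (subsetP (O_sub vD)).
have yC : y \in C by apply: (subsetP (O_sub vD)).
have nxy : x != y by apply: contraNneq xw => ->.
have xD : [set x] \in D.
  rewrite /D /O_vertices; apply/setU1P; right; apply/imsetP; exists [set x].
    rewrite inE Hsing /= /C_test; apply/andP; split.
      by apply/set0Pn; exists x; rewrite !inE eqxx xC.
    by apply/set0Pn; exists y; rewrite !inE yC andbT eq_sym nxy.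
  by apply/esym/setIidPl; rewrite sub1set.
have xvp : [set x] \proper v.
  rewrite properEneq sub1set xv andbT; apply/eqP => E.
  by move: yv; rewrite -E inE eq_sym (negbTE nxy).
case: (cover_below vD xD xvp) => u vu0; have vu : a v u := vu0; rewrite sub1set => xu.
have nwu : w != u by apply: contraNneq xw => ->.
have : [set w; u] \subset [set z in D | a v z].
  apply/subsetP => z /set2P[]->; rewrite in_set ?wD ?vw //.
  by case/andP: (arcD _ _ vu) => _ ->; rewrite vu.
by move/subset_leq_card; rewrite cards2 nwu.
Qed.
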